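(* Let $q$ be a prime power and $m \ge 2$ an integer, and let $g = \gcd(q-1, m(m-1))$. For any partition $\lambda$ of $m$ such that $S_{\lambda,\mathbb{F}_q}$ is nonempty, $|D_{\lambda,\mathbb{F}_q}| \ge \frac{q-1}{g}$.
   Context: For a partition $\lambda = (\lambda_1,\dots,\lambda_k)$ of $m$ (positive integers summing to $m$), a monic $f \in \mathbb{F}_q[x]$ of degree $m$ has factorization type $\lambda$ if $f = \pi_1\cdots\pi_k$ with the $\pi_i$ distinct monic irreducible polynomials and $\deg \pi_i = \lambda_i$. $S_{\lambda,\mathbb{F}_q}$ is the set of monic squarefree polynomials in $\mathbb{F}_q[x]$ of factorization type $\lambda$, and $D_{\lambda,\mathbb{F}_q} = \{\operatorname{disc}(f) : f \in S_{\lambda,\mathbb{F}_q}\}$. For $f$ of degree $m\ge 2$ with leading coefficient $a_m$ and roots $\alpha_i$ in a splitting field, $\operatorname{disc}(f) = a_m^{2m-2}\prod_{i<j}(\alpha_i-\alpha_j)^2$. *)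

(* Defs.v *)
From HB Require Import structures.
From mathcomp Require Import all_boot all_order all_algebra all_field.
Set Implicit Arguments. Unset Strict Implicit. Unset Printing Implicit Defensive.
Import GRing.Theory.
Local Open Scope ring_scope.

Definition is_partition (m : nat) (lam : seq nat) : Prop :=
  [/\ all (fun n => 0 < n)%N lam, sorted geq lam & sumn lam = m].

(* f has factorization type lam: f = pi_1 ... pi_k with the pi_i distinct
   monic irreducible polynomials, deg pi_i = lam_i.  (Such f is automatically
   monic squarefree of degree sumn lam.)  This is membership in S_{lam,F}. *)
Definition in_S (F : fieldType) (lam : seq nat) (f : {poly F}) : Prop :=
  exists ps : seq {poly F},
    [/\ uniq ps,
        all (fun p : {poly F} => p \is monic) ps,
        (forall p, p \in ps -> irreducible_poly p),
        map (fun p : {poly F} => (size p).-1) ps = lam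
      & f = \prod_(p <- ps) p].

Definition is_disc (F : fieldType) (f : {poly F}) (d : F) : Prop :=
  exists (L : fieldExtType F) (r : seq L),
    map_poly (in_alg L) f = ((lead_coef f)%:A)%:P * \prod_(x <- r) ('X - x%:P)
    /\ d%:A = ((lead_coef f)%:A) ^+ (2 * (size f).-1 - 2)
              * \prod_(i < size r) \prod_(j < size r | (i < j)%N) (r`_i - r`_j) ^+ 2.

(* Main.v *)
Set Warnings "-all".
Require Import Defs.
From HB Require Import structures.
From mathcomp Require Import all_boot all_order all_algebra all_field.
From Stdlib Require Import ClassicalEpsilon.
Set Implicit Arguments. Unset Strict Implicit. Unset Printing Implicit Defensive.
Import GRing.Theory.
Local Open Scope ring_scope.

Lemma finField_pow_card (F : finFieldType) (x : F) : x != 0 -> x ^+ (#|F| - 1) = 1.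
Proof.
move=> nx; have c1 : (0 < #|F|)%N by apply/card_gt0P; exists 0.
apply: (mulIf nx); rewrite mul1r -exprSr subn1 prednK //; exact: expf_card.
Qed.

Lemma count_powers (F : finFieldType) (k : nat) (d0 : F) : (0 < k)%N -> d0 != 0 ->
  ((#|F| - 1) %/ gcdn (#|F| - 1) k <=
   #|[set (a ^+ k * d0)%R | a in [set x : F | x != 0%R]]|)%N.
Proof.
move=> k0 nd0.
set n := (#|F| - 1)%N. set g := gcdn n k.
have n0 : (0 < n)%N.
  rewrite /n subn_gt0; exact: (finNzRing_gt1 F).
have g0 : (0 < g)%N by rewrite gcdn_gt0 n0.
set U := [set x : F | x != 0].
set phi := fun a : F => a ^+ k * d0.
set I := [set phi a | a in U].
have cardU : #|U| = n.
  have -> : U = [set~ 0] by apply/setP => x; rewrite !inE.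
  by rewrite cardsC1 /n subn1.
have cardR : (#|[pred x : F | x ^+ g == 1%R]| <= g)%N.
  rewrite cardE; apply: max_unity_roots => //; last exact: enum_uniq.
  by apply/allP => x; rewrite mem_enum inE -unity_rootE.
have fib : forall b, b \in I -> (#|[pred a | (a \in U) && (phi a == b)]| <= g)%N.
  move=> b /imsetP[a0 Ua0 ->].
  have na0 : a0 != 0 by move: Ua0; rewrite inE.
  apply: leq_trans cardR.
  have inj : injective (fun a : F => a / a0).
    by move=> x y /= /(mulIf (invr_neq0 na0)).
  rewrite -(card_image inj).
  apply: subset_leq_card; apply/subsetP => y /imageP[a].
  rewrite !inE /phi => /andP[na /eqP e] ->.
  have e2 : (a / a0) ^+ k = 1.
    by rewrite exprMn exprVn (mulIf nd0 e) divff // expf_neq0.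
  have [t _ /dvdnP[s es]] := Bezoutl k n0.
  have nz : a / a0 != 0 by rewrite mulf_neq0 ?invr_neq0.
  have : (a / a0) ^+ (g + t * k) = 1.
    by rewrite es mulnC exprM finField_pow_card ?expr1n.
  by rewrite exprD mulnC exprM e2 expr1n mulr1 => ->.
have key : (n <= #|I| * g)%N.
  rewrite -cardU -sum1_card.
  rewrite (partition_big phi (mem I)); last by move=> a Ua; apply: imset_f.
  rewrite -sum_nat_const; apply: leq_sum => b Ib.
  rewrite sum1_card; exact: fib.
by rewrite -(mulnK #|I| g0); apply: leq_div2r.
Qed.
Lemma prod_neq_split (R : comPzRingType) n (h : 'I_n -> 'I_n -> R) :
  \prod_(i < n) \prod_(j < n | i != j) h i j
  = \prod_(i < n) \prod_(j < n | (i < j)%N) (h i j * h j i).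
Proof.
rewrite (eq_bigr (fun i : 'I_n => (\prod_(j < n | (i < j)%N) h i j) * \prod_(j < n | (j < i)%N) h i j)); last first.
  move=> i _; rewrite (bigID (fun j : 'I_n => (i < j)%N)) /=; congr (_ * _); apply: eq_bigl => j.
    by rewrite -(inj_eq val_inj) /= neq_ltn; case: ltngtP.
  by rewrite -(inj_eq val_inj) /= neq_ltn; case: ltngtP.
rewrite [RHS](eq_bigr (fun i : 'I_n => (\prod_(j < n | (i < j)%N) h i j) * \prod_(j < n | (i < j)%N) h j i)); last first.
  by move=> i _; rewrite big_split.
rewrite !big_split /=; congr (_ * _).
rewrite (exchange_big_dep xpredT) //=.
Qed.

Lemma disc_sign (R : comPzRingType) n (s : 'I_n -> R) :
  \prod_(i < n) \prod_(j < n | i != j) (s i - s j) =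
  (\prod_(i < n) \prod_(j < n | (i < j)%N) (-1)) *
  \prod_(i < n) \prod_(j < n | (i < j)%N) (s i - s j) ^+ 2.
Proof.
rewrite prod_neq_split -big_split; apply: eq_bigr => i _.
rewrite -big_split; apply: eq_bigr => j _.
by rewrite -[s j - s i]opprB mulrN expr2 /= mulN1r.
Qed.

Section Frob.
Variables (F : finFieldType) (L : fieldExtType F).

Definition frobf (x : L) := x ^+ #|F|.

Lemma frob_zmod : zmod_morphism frobf.
Proof.
rewrite /frobf => x y.
have [p _ pcharFp] := finPcharP F; rewrite (card_pprimeChar pcharFp).
elim: (logn _ _) => // n IHn; rewrite expnSr !exprM {}IHn.
by rewrite -(pchar_lalg L) in pcharFp; rewrite -pFrobenius_autE rmorphB.
Qed.

Lemma frob_mon : monoid_morphism frobf.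
Proof. by rewrite /frobf; split=> [|x y]; rewrite ?exprMn ?expr1n. Qed.

HB.instance Definition _ := GRing.isZmodMorphism.Build _ _ frobf frob_zmod.
HB.instance Definition _ := GRing.isMonoidMorphism.Build _ _ frobf frob_mon.

Lemma frob_alg (c : F) : frobf (c%:A) = c%:A.
Proof. by rewrite /frobf -in_algE -rmorphXn expf_card. Qed.

End Frob.

Lemma disc_in_F (F : finFieldType) (L : fieldExtType F) (f0 : {poly F}) (r : seq L) :
  map_poly (in_alg L) f0 = \prod_(x <- r) ('X - x%:P) -> uniq r ->
  exists d : F, d%:A = \prod_(i < size r) \prod_(j < size r | (i < j)%N) (r`_i - r`_j) ^+ 2.
Proof.
move=> Er ur.
set n := size r.
set P := \prod_(i < n) \prod_(j < n | (i < j)%N) (r`_i - r`_j) ^+ 2.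
pose fr := frobf (L := L).
have Fr : forall x, x \in r -> fr x \in r.
  move=> x xr.
  have rx : root (map_poly (in_alg L) f0) x by rewrite Er root_prod_XsubC.
  rewrite -root_prod_XsubC -Er.
  have -> : map_poly (in_alg L) f0 = map_poly fr (map_poly (in_alg L) f0).
    rewrite -map_poly_comp; apply: eq_map_poly => c /=; by rewrite /fr frob_alg.
  by rewrite rootE horner_map (rootP rx) rmorph0.
have memF : forall i : 'I_n, (index (fr (nth 0%R r i)) r < n)%N.
  by move=> i; rewrite index_mem Fr // mem_nth.
pose sg := fun i : 'I_n => Ordinal (memF i).
have sgE : forall i, r`_(sg i) = fr r`_i.
  by move=> i; rewrite /= nth_index // Fr // mem_nth.
have sg_inj : injective sg.
  move=> i j /(congr1 (fun k : 'I_n => r`_k)); rewrite !sgE => /fmorph_inj.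
  move/eqP; rewrite nth_uniq // => /eqP; exact: val_inj.
set Q := \prod_(i < n) \prod_(j < n | i != j) (r`_i - r`_j).
have FQ : fr Q = Q.
  rewrite /Q /fr rmorph_prod.
  rewrite [RHS](reindex_inj sg_inj); apply: eq_bigr => i _.
  rewrite rmorph_prod [RHS](reindex_inj sg_inj).
  rewrite [RHS](eq_bigl (fun j => i != j)); last by move=> j; rewrite /= (inj_eq sg_inj).
  by apply: eq_bigr => j _; rewrite !sgE rmorphB.
set c := \prod_(i < n) \prod_(j < n | (i < j)%N) (-1 : L).
have QcP : Q = c * P by rewrite /Q disc_sign.
have Fc : fr c = c.
  rewrite /c /fr rmorph_prod; apply: eq_bigr => i _; rewrite rmorph_prod; apply: eq_bigr => j _.
  exact: rmorphN1.
have c0 : c != 0.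
  by rewrite /c prodf_seq_neq0; apply/allP => i _; apply/implyP => _; rewrite prodf_seq_neq0; apply/allP => j _; apply/implyP => _; rewrite oppr_eq0 oner_eq0.
have FP : fr P = P.
  by apply: (mulfI c0); rewrite -QcP -{1}Fc -rmorphM -QcP.
have : P \in 1%VS.
  by rewrite (Fermat's_little_theorem 1%AS) dimv1 expn1; apply/eqP; exact: FP.
case/vlineP => d ->; by exists d.
Qed.
Lemma irr_sep (F : finFieldType) (p : {poly F}) : irreducible_poly p -> separable_poly p.
Proof.
move=> irr; have p0 := irredp_neq0 irr.
have [L [rs Ers _]] := FinSplittingFieldFor p0.
have Lp1 : (1 < size (map_poly (in_alg L) p))%N by rewrite size_map_poly; case: irr.
have [x xrs] : exists x, x \in rs.
  case: rs Ers => [|x rs] E; last by exists x; rewrite mem_head.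
  by move: Lp1; rewrite (eqp_size E) big_nil size_poly1.
have rx : root (map_poly (in_alg L) p) x.
  by rewrite (eqp_root Ers) root_prod_XsubC.
have /and3P[_ /separableP sepL _] := finField_galois (sub1v (fullv : {subfield L})).
have sx := sepL x (memvf x); rewrite /separable_element in sx.
have [g Eg] := polyOver1P (minPolyOver 1 x).
have gp : g %| p.
  by rewrite -(dvdp_map (in_alg L)) -Eg; apply: minPoly_dvdp => //; exact: alg_polyOver.
have sg : size g != 1%N.
  have : (1 < size (minPoly 1 x))%N.
    by apply: root_size_gt1 (root_minPoly 1 x); rewrite monic_neq0 ?monic_minPoly.
  by rewrite Eg size_map_poly => /gtn_eqF ->.
have gp2 := irr _ sg gp.
by rewrite -(eqp_separable gp2) -(separable_map (in_alg L)) -Eg.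
Qed.

Lemma coprime_irr (F : fieldType) (p q : {poly F}) :
  irreducible_poly p -> irreducible_poly q -> p \is monic -> q \is monic -> p != q ->
  coprimep p q.
Proof.
move=> ip iq mp mq npq; rewrite coprimep_def; apply/negPn/negP => sg.
have := ip _ sg (dvdp_gcdl p q) => /eqp_dvdl e.
have pq : p %| q by rewrite -e dvdp_gcdr.
have sp : size p != 1%N by case: ip => /gtn_eqF ->.
by move: (iq _ sp pq); rewrite eqp_monic // (negPf npq).
Qed.

Lemma sep_prod (F : finFieldType) (ps : seq {poly F}) :
  uniq ps -> all (fun p : {poly F} => p \is monic) ps ->
  (forall p, p \in ps -> irreducible_poly p) -> separable_poly (\prod_(p <- ps) p).
Proof.
elim: ps => [|p ps IH] /=; first by move=> *; rewrite big_nil unlock /separable_poly coprime1p.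
move=> /andP[pn u] /andP[mp m] irr; rewrite big_cons separable_mul.
have sps : separable_poly (\prod_(p <- ps) p).
  by apply: IH => // q qs; apply: irr; rewrite inE qs orbT.
apply/and3P; split; [exact: irr_sep (irr _ (mem_head _ _)) | exact: sps |].
clear IH sps; elim: ps pn u m irr => [|q qs IH2] pn u m irr; first by rewrite big_nil coprimep1.
rewrite big_cons coprimepMr; move: pn u m irr; rewrite /= !inE negb_or => /andP[pq pqs] /andP[_ u] /andP[mq m] irr.
apply/andP; split; first by apply: coprime_irr => //; apply: irr; rewrite !inE eqxx ?orbT.
apply: IH2 => // r; rewrite !inE => /orP[/eqP->|rq]; apply: irr; rewrite !inE ?eqxx ?rq ?orbT //.
Qed.
Section Scale.
Variable K : fieldType.
Implicit Types p q : {poly K}.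

Definition sc (a : K) p := a ^+ (size p).-1 *: (p \Po (a^-1 *: 'X)).

Variables (a : K) (a0 : a != 0).

Lemma size_aX (b : K) : b != 0 -> size (b *: 'X : {poly K}) = 2%N.
Proof. by move=> b0; rewrite size_scale // size_polyX. Qed.

Lemma size_sc p : size (sc a p) = size p.
Proof. by rewrite /sc size_scale ?expf_neq0 // size_comp_poly2 // size_aX ?invr_neq0. Qed.

Lemma lead_sc p : lead_coef (sc a p) = lead_coef p.
Proof.
rewrite /sc lead_coefZ lead_coef_comp ?size_aX ?invr_neq0 //.
by rewrite lead_coefZ lead_coefX mulr1 mulrCA -exprMn mulfV // expr1n mulr1.
Qed.

Lemma monic_sc p : p \is monic -> sc a p \is monic.
Proof. by rewrite !monicE lead_sc. Qed.

Lemma scM p q : p != 0 -> q != 0 -> sc a (p * q) = sc a p * sc a q.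
Proof.
move=> p0 q0; rewrite /sc size_mul // comp_polyM -scalerAl -scalerAr scalerA -exprD.
congr (_ ^+ _ *: _).
have := size_poly_gt0 p; have := size_poly_gt0 q; rewrite p0 q0.
case: (size p) => // n; case: (size q) => // k _ _ /=; by rewrite addnS.
Qed.

Lemma sc1 : sc a 1 = 1.
Proof. by rewrite /sc size_poly1 expr0 scale1r -polyC1 comp_polyC. Qed.

Lemma sc_prod (ps : seq {poly K}) : all (fun p => p != 0) ps ->
  sc a (\prod_(p <- ps) p) = \prod_(p <- ps) sc a p.
Proof.
elim: ps => [|p ps IH] /=; first by rewrite !big_nil sc1.
move=> /andP[p0 ps0]; rewrite !big_cons scM ?IH //.
by rewrite prodf_seq_neq0; apply/allP => q qs; apply/implyP => _; apply: (allP ps0).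
Qed.

End Scale.

Lemma scK (K : fieldType) (a : K) p : a != 0 -> sc a^-1 (sc a p) = p.
Proof.
move=> a0; rewrite [sc a^-1 _]/sc size_sc // /sc comp_polyZ -comp_polyA scalerA.
rewrite -exprMn mulVf // expr1n scale1r invrK comp_polyZ comp_polyX scalerA mulVf //.
by rewrite scale1r comp_polyXr.
Qed.

Lemma sc_dvd (K : fieldType) (a : K) p q : a != 0 -> p %| q -> sc a p %| sc a q.
Proof.
move=> a0 pq; rewrite /sc dvdpZl ?expf_neq0 // dvdpZr ?expf_neq0 //.
exact: dvdp_comp_poly.
Qed.

Lemma sc_eqp (K : fieldType) (a : K) p q : a != 0 -> p %= q -> sc a p %= sc a q.
Proof. by move=> a0 /andP[pq qp]; rewrite /eqp !sc_dvd. Qed.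

Lemma irr_sc (K : fieldType) (a : K) p : a != 0 -> irreducible_poly p -> irreducible_poly (sc a p).
Proof.
move=> a0 [sp ip]; split; first by rewrite size_sc.
move=> q sq qd.
have ai : a^-1 != 0 by rewrite invr_neq0.
have h : sc a^-1 q %| p by rewrite -(scK p a0); apply: sc_dvd.
have e : sc a^-1 q %= p by apply: ip h; rewrite size_sc.
by rewrite -[q](scK q ai) invrK; apply: sc_eqp.
Qed.

Lemma sc_roots (L : fieldType) (b : L) (r : seq L) : b != 0 ->
  b ^+ size r *: ((\prod_(x <- r) ('X - x%:P)) \Po (b^-1 *: 'X)) =
  \prod_(x <- r) ('X - (b * x)%:P).
Proof.
move=> b0; elim: r => [|x r IH]; first by rewrite !big_nil expr0 scale1r -polyC1 comp_polyC.
rewrite !big_cons comp_polyM /= exprS -scalerA scalerAr IH scalerAl; congr (_ * _).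
rewrite comp_polyB comp_polyX comp_polyC scalerBr scalerA mulfV // scale1r.
by rewrite scale_polyC.
Qed.

Definition pb (P : Prop) : bool := if excluded_middle_informative P then true else false.
Lemma pbP (P : Prop) : reflect P (pb P).
Proof. by rewrite /pb; case: excluded_middle_informative => h; constructor. Qed.

Lemma size_prod_monic (F : fieldType) (ps : seq {poly F}) :
  all (fun p : {poly F} => p \is monic) ps ->
  size (\prod_(p <- ps) p) = (sumn (map (fun p : {poly F} => (size p).-1) ps)).+1.
Proof.
elim: ps => [|p ps IH]; first by move=> _; rewrite big_nil size_poly1.
move=> /andP[mp m]; have mr : \prod_(p <- ps) p \is monic.
  by rewrite big_seq monic_prod // => q /(allP m).
have e := IH m.
rewrite big_cons size_Mmonic ?monic_neq0 // e /= addnS /=.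
have : (0 < size p)%N by rewrite size_poly_gt0 monic_neq0.
by case: (size p) => // n _; rewrite addSn.
Qed.

Theorem lemma4p2 (F : finFieldType) (m : nat) (lam : seq nat) :
  (2 <= m)%N -> is_partition m lam -> (exists f : {poly F}, in_S lam f) ->
  exists D : {set F},
    (forall d : F, d \in D <-> exists f : {poly F}, in_S lam f /\ is_disc f d)
    /\ ((#|F| - 1) %/ gcdn (#|F| - 1) (m * (m - 1)) <= #|D|)%N.
Proof.
move=> m2 [_ _ sumE] [f0 [ps [u mon irr lamE f0E]]].
pose D := [set d : F | pb (exists f : {poly F}, in_S lam f /\ is_disc f d)].
exists D; split.
  by move=> d; rewrite inE; split => [/pbP|h] //; apply/pbP.
have ps0 : all (fun p : {poly F} => p != 0) ps.
  by apply/allP => p pp; rewrite monic_neq0 // (allP mon).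
have sf0 : size f0 = m.+1.
  by rewrite f0E size_prod_monic // lamE sumE.
have mf0 : f0 \is monic by rewrite f0E big_seq monic_prod // => p pp; apply: (allP mon).
have f00 : f0 != 0 by rewrite monic_neq0.
have [L [rs Ers _]] := FinSplittingFieldFor f00.
have Er : map_poly (in_alg L) f0 = \prod_(x <- rs) ('X - x%:P).
  apply/eqP; rewrite -eqp_monic ?monic_prod_XsubC ?map_monic //.
have urs : uniq rs.
  rewrite -separable_prod_XsubC -Er separable_map f0E; exact: sep_prod.
have srs : size rs = m.
  by move: (congr1 (fun p : {poly L} => size p) Er); rewrite size_map_poly sf0 size_prod_XsubC; case=> ->.
have [d0 Ed0] := disc_in_F Er urs.
have P0 : \prod_(i < size rs) \prod_(j < size rs | (i < j)%N) (rs`_i - rs`_j) ^+ 2 != 0.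
  rewrite prodf_seq_neq0; apply/allP => i _; apply/implyP => _.
  rewrite prodf_seq_neq0; apply/allP => j _; apply/implyP => ij.
  by rewrite expf_neq0 // subr_eq0 nth_uniq // neq_ltn ij.
have d00 : d0 != 0.
  by apply: contraNneq P0 => d0E; rewrite -Ed0 d0E scale0r.
set k := (m * (m - 1))%N.
have k0 : (0 < k)%N by rewrite /k muln_gt0 subn_gt0; case: m m2 {sumE sf0 srs k} => // [[]].
apply: (leq_trans (count_powers k0 d00)).
apply: subset_leq_card; apply/subsetP => x /imsetP[a]; rewrite inE => a0 ->.
rewrite inE; apply/pbP; exists (sc a f0); split.
  exists (map (sc a) ps); split.
  - by rewrite map_inj_uniq //; exact: (can_inj (fun p => scK p a0)).
  - by rewrite all_map; apply/allP => p pp /=; rewrite monic_sc //; exact: (allP mon).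
  - by move=> p /mapP[q qp ->]; apply: irr_sc => //; apply: irr.
  - by rewrite -map_comp -lamE; apply: eq_map => p /=; rewrite size_sc.
  - by rewrite f0E sc_prod // big_map.
have lc : lead_coef (sc a f0) = 1 by rewrite lead_sc //; exact/monicP.
set al := (a%:A : L).
have al0 : al != 0 by rewrite /al -in_algE fmorph_eq0.
exists L, (map (fun x => al * x) rs); rewrite lc scale1r expr1n mul1r; split.
  rewrite polyC1 mul1r /sc map_polyZ map_comp_poly map_polyZ map_polyX Er.
  rewrite rmorphXn fmorphV /= -/al sf0 /= -srs sc_roots // big_map //.
rewrite size_map.
rewrite (eq_bigr (fun i : 'I_(size rs) => \prod_(j < size rs | (i < j)%N) (al * al * (rs`_i - rs`_j) ^+ 2))); last first.
  move=> i _; apply: eq_bigr => j _.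
  by rewrite !(nth_map 0) // -mulrBr exprMn expr2.
rewrite (eq_bigr (fun i : 'I_(size rs) => (\prod_(j < size rs | (i < j)%N) (al * al)) * \prod_(j < size rs | (i < j)%N) (rs`_i - rs`_j) ^+ 2)); last first.
  by move=> i _; rewrite big_split.
rewrite big_split /= -Ed0 -(prod_neq_split (fun _ _ => al)).
rewrite (eq_bigr (fun i : 'I_(size rs) => al ^+ (size rs).-1)); last first.
  move=> i _; rewrite (eq_bigl (fun j => j \in [set~ i])); last by move=> j; rewrite !inE eq_sym.
  by rewrite prodr_const cardsC1 card_ord.
rewrite prodr_const card_ord -exprM srs /k -subn1.
by rewrite /al -!in_algE rmorphM rmorphXn mulnC.
Qed.
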